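(* Let $p\in(0,1)$, $\beta>0$, $\mu_P,\mu_N\in\mathbb R^d$ and let $\Sigma_P,\Sigma_N$ be symmetric positive semidefinite $d\times d$ matrices. For $\alpha\in(0,1)$ let $\pi(\alpha)=\sqrt{(1-\alpha)/\alpha}$. Consider the optimization problem $$\min_{\alpha_P,\alpha_N\in(0,1),\,w\in\mathbb R^d\setminus\{0\},\,b\in\mathbb R}\ \frac{(1-p)\alpha_N+\beta^2p\,\alpha_P}{1-\alpha_P}$$ subject to $$w^T\mu_P-b\ge\pi(\alpha_P)\sqrt{w^T\Sigma_P w},\qquad b-w^T\mu_N\ge\pi(\alpha_N)\sqrt{w^T\Sigma_N w}.$$ Then the minimal value of this problem is attained at a point where both inequality constraints hold with equality; i.e., at an optimal solution $(w^\star,b^\star,\alpha_P^\star,\alpha_N^\star)$ one has $(w^\star)^T\mu_P-b^\star=\pi(\alpha_P^\star)\sqrt{(w^\star)^T\Sigma_P w^\star}$ and $b^\star-(w^\star)^T\mu_N=\pi(\alpha_N^\star)\sqrt{(w^\star)^T\Sigma_N w^\star}$.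
   Context: $\mu_P,\Sigma_P$ and $\mu_N,\Sigma_N$ are the mean and covariance matrix of the positive and negative class, respectively; $\alpha_P$ and $\alpha_N$ play the roles of worst-case false negative and false positive rates. *)

(* Defs.v *)
From HB Require Import structures.
From mathcomp Require Import all_boot all_order all_algebra.
From mathcomp Require Import reals.
Set Implicit Arguments. Unset Strict Implicit. Unset Printing Implicit Defensive.
Import Order.TTheory GRing.Theory Num.Theory.
Local Open Scope ring_scope.

Definition qform (R : realType) (d : nat) (S : 'M[R]_d) (x : 'cV[R]_d) : R :=
  (x^T *m S *m x) 0 0.

Definition dotv (R : realType) (d : nat) (w mu : 'cV[R]_d) : R := (w^T *m mu) 0 0.

Definition sym_psd (R : realType) (d : nat) (S : 'M[R]_d) : Prop :=
  S^T = S /\ forall x : 'cV[R]_d, 0 <= qform S x.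

Definition piA (R : realType) (a : R) : R := Num.sqrt ((1 - a) / a).

Definition objective (R : realType) (p beta aP aN : R) : R :=
  ((1 - p) * aN + beta ^+ 2 * p * aP) / (1 - aP).

Definition feasible (R : realType) (d : nat) (muP muN : 'cV[R]_d) (SP SN : 'M[R]_d)
  (w : 'cV[R]_d) (b aP aN : R) : Prop :=
  [/\ 0 < aP < 1, 0 < aN < 1, w != 0,
      piA aP * Num.sqrt (qform SP w) <= dotv w muP - b
    & piA aN * Num.sqrt (qform SN w) <= b - dotv w muN].

(* Main.v *)
Require Import Defs.
From HB Require Import structures.
From mathcomp Require Import all_boot all_order all_algebra.
From mathcomp Require Import reals.
From mathcomp Require Import ring lra.
Import Order.TTheory GRing.Theory Num.Theory.
Local Open Scope ring_scope.

Lemma obj_lt (R : realType) (p beta a a' c : R) : 0 < p < 1 -> 0 < beta ->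
  0 <= c -> 0 < a' -> a' < a -> a < 1 ->
  (c + beta ^+ 2 * p * a') / (1 - a') < (c + beta ^+ 2 * p * a) / (1 - a).
Proof.
move=> /andP[p0 p1] b0 c0 a'0 a'a a1.
have k0 : 0 < beta ^+ 2 * p by rewrite mulr_gt0 // exprn_gt0.
set k := beta ^+ 2 * p in k0 *.
rewrite ltr_pdivrMr ?subr_gt0 ?(lt_trans a'a) // [X in _ < X]mulrAC ltr_pdivlMr ?subr_gt0 //.
nra.
Qed.

Lemma tighten (R : realType) (a q s : R) : 0 < a < 1 -> 0 <= q ->
  piA a * Num.sqrt q < s -> exists a', 0 < a' < a /\ piA a' * Num.sqrt q <= s.
Proof.
move=> /andP[a0 a1] q0 H.
have s0 : 0 < s by apply: le_lt_trans H; rewrite mulr_ge0 // sqrtr_ge0.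
have e : (1 - a) / a * q < s ^+ 2.
  have h1 : 0 <= piA a * Num.sqrt q by rewrite mulr_ge0 // sqrtr_ge0.
  have : (piA a * Num.sqrt q) ^+ 2 < s ^+ 2.
    by rewrite ltr_pXn2r // ?nnegrE // ltW.
  rewrite exprMn /piA !sqr_sqrtr //.
  by rewrite divr_ge0 // ?subr_ge0 ltW.
have e2 : (1 - a) * q < a * s ^+ 2.
  by move: e; rewrite mulrAC ltr_pdivrMr //; lra.
set t := s ^+ 2 + q.
have t0 : 0 < t by rewrite /t ltr_wpDr // exprn_gt0.
have qt : q < a * t by rewrite /t; nra.
exists ((a + q / t) / 2).
have qt0 : 0 <= q / t by rewrite divr_ge0 // ltW.
have qta : q / t < a by rewrite ltr_pdivrMr // mulrC.
split; first by apply/andP; split; lra.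
set a' := (a + q / t) / 2.
have a'0 : 0 < a' by rewrite /a'; lra.
have key : (1 - a') / a' * q <= s ^+ 2.
  rewrite mulrAC ler_pdivrMr //.
  have : q <= a' * t.
    rewrite /a' mulrAC mulrDl divfK ?gt_eqF //; lra.
  rewrite /t; lra.
rewrite -(ger0_norm (ltW s0)) -sqrtr_sqr /piA -sqrtrM ?ler_sqrt //.
  by rewrite sqr_ge0.
by rewrite divr_ge0 ?ltW // subr_gt0 /a'; lra.
Qed.
Arguments tighten {R}.
Arguments obj_lt {R}.

Theorem lemma4 (R : realType) (d : nat) (p beta : R)
  (muP muN : 'cV[R]_d) (SP SN : 'M[R]_d) :
  0 < p < 1 -> 0 < beta -> sym_psd SP -> sym_psd SN ->
  forall (w : 'cV[R]_d) (b aP aN : R),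
    feasible muP muN SP SN w b aP aN ->
    (forall (w' : 'cV[R]_d) (b' aP' aN' : R),
        feasible muP muN SP SN w' b' aP' aN' ->
        objective p beta aP aN <= objective p beta aP' aN') ->
    dotv w muP - b = piA aP * Num.sqrt (qform SP w) /\
    b - dotv w muN = piA aN * Num.sqrt (qform SN w).
Proof.
move=> hp hb [_ qP] [_ qN] w b aP aN [hP hN w0 cP cN] opt.
have /andP[p0 p1] := hp.
have /andP[aP0 aP1] := hP.
have /andP[aN0 aN1] := hN.
split.
  case: (ltrP (piA aP * Num.sqrt (qform SP w)) (dotv w muP - b)) => h; last first.
    by apply/eqP; rewrite eq_le h cP.
  have [a' [/andP[a'0 a'a] ha']] := tighten _ _ _ hP (qP w) h.
  have := opt w b a' aN.
  have F : feasible muP muN SP SN w b a' aN.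
    by split => //; apply/andP; split => //; apply: lt_trans a'a aP1.
  move=> /(_ F); rewrite /objective => H.
  have : 0 <= (1 - p) * aN by rewrite mulr_ge0 ?subr_ge0 ?ltW.
  move=> /(obj_lt _ _ _ _ _ hp hb)/(_ a'0 a'a aP1) H2.
  by move: (le_lt_trans H H2); rewrite ltxx.
case: (ltrP (piA aN * Num.sqrt (qform SN w)) (b - dotv w muN)) => h; last first.
  by apply/eqP; rewrite eq_le h cN.
have [a' [/andP[a'0 a'a] ha']] := tighten _ _ _ hN (qN w) h.
have := opt w b aP a'.
have F : feasible muP muN SP SN w b aP a'.
  by split => //; apply/andP; split => //; apply: lt_trans a'a aN1.
move=> /(_ F); rewrite /objective => H.
have H2 : ((1 - p) * a' + beta ^+ 2 * p * aP) / (1 - aP) <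
          ((1 - p) * aN + beta ^+ 2 * p * aP) / (1 - aP).
  by rewrite ltr_pM2r ?invr_gt0 ?subr_gt0 // ltrD2r ltr_pM2l // subr_gt0.
by move: (le_lt_trans H H2); rewrite ltxx.
Qed.
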